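(* Let $g:[0,1]\to\mathbb R$ be defined by $g(p)=\frac{1}{2+p}\bigl(1-\exp(-\frac{2+p}{p}\ln\frac1{1-p})\bigr)$ for $p\in(0,1)$, with $g(0)=\frac12(1-e^{-2})$ and $g(1)=\frac13$ (the limiting values). Then $$\inf_{\mu}\ \max\Bigl\{\int_{[0,1]}g(q)\,d\mu(q),\ \int_{[0,1]}q\,d\mu(q)\Bigr\}\ =\ \frac{3e^2-3}{7e^2-3}\approx0.3934,$$ where the infimum ranges over all probability measures $\mu$ on $[0,1]$. The infimum is attained by the measure that puts mass $\frac{3e^2-3}{7e^2-3}$ on the point $1$ and the remaining mass on the point $0$. *)

(* Defs.v *)
From HB Require Import structures.
From mathcomp Require Import all_boot all_order all_algebra.
From mathcomp Require Import all_classical all_reals all_analysis.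
Set Implicit Arguments. Unset Strict Implicit. Unset Printing Implicit Defensive.
Import Order.TTheory GRing.Theory Num.Theory.
Local Open Scope ring_scope.
Local Open Scope classical_set_scope.

(* The function g : [0,1] -> R of the paper, extended by its limiting values
   at 0 and 1 (values outside [0,1] are irrelevant). *)
Definition gfun (R : realType) (p : R) : R :=
  if p == 0 then 2^-1 * (1 - expR (- 2))
  else if p == 1 then 3^-1
  else (2 + p)^-1 * (1 - expR (- ((2 + p) / p * ln ((1 - p)^-1)))).

(* Probability measures on [0,1], viewed as probability measures on R
   (Borel) concentrated on [0,1]. *)
Definition prob01 (R : realType) : set (probability R R) :=
  [set mu | mu `[0, 1] = 1%E].

Definition objective (R : realType) (mu : probability R R) : \bar R :=
  maxe (\int[mu]_(q in `[0%R, 1%R]) (gfun q)%:E)%E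
       (\int[mu]_(q in `[0%R, 1%R]) q%:E)%E.

Definition cstar (R : realType) : R :=
  (3 * expR 2 - 3) / (7 * expR 2 - 3).

(* Main.v *)
Require Import Defs.
From HB Require Import structures.
From mathcomp Require Import all_boot all_order all_algebra.
From mathcomp Require Import all_classical all_reals all_analysis.
From mathcomp Require Import lra ring measurable_realfun.
Import Order.TTheory GRing.Theory Num.Theory.
Local Open Scope ring_scope.
Local Open Scope classical_set_scope.
Section S.
Context (R : realType).
Definition sp (t : R) := t + t ^+ 2 / 2 + t ^+ 3 / 3.
Definition hh (t : R) := (1 - t) * expR (sp t).
Lemma hh_der (x : R) : is_derive x 1 hh (- x ^+ 3 * expR (sp x)).
Proof.
have ds : is_derive x 1 sp (1 + x + x ^+ 2).
  rewrite /sp.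
  apply: is_derive_eq.
  rewrite /GRing.scale /= ?mulr0 ?oppr0 ?addr0 ?add0r /= ?mulr1.
  by field.
have d2 : is_derive x 1 (expR \o sp) (expR (sp x) * (1 + x + x ^+ 2)).
  exact: (is_derive1_comp (is_derive_expR (sp x)) ds).
have d1 : is_derive x 1 (fun t : R => 1 - t) (-1).
  by apply: is_derive_eq; rewrite add0r mul1r.
have := is_deriveM d1 d2.
rewrite /hh => H; apply: is_derive_eq H _.
rewrite /GRing.scale /=. ring.
Qed.

Lemma hh_le1 (p : R) : 0 <= p < 1 -> hh p <= 1.
Proof.
move=> /andP[p0 p1].
have -> : 1 = hh 0.
  rewrite /hh /sp (_ : 0 + 0 ^+ 2 / 2 + 0 ^+ 3 / 3 = 0 :> R) ?expR0 ?subr0 ?mulr1 //.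
  by rewrite !expr0n /= !mul0r !addr0.
have H := @ler0_derive1_le_cc R hh 0 p.
apply: H.
- move=> x _; exact: (@ex_derive _ _ _ _ _ _ _ (hh_der x)).
- move=> x; rewrite in_itv /= => /andP[x0 _].
  rewrite derive1E (@derive_val _ _ _ _ _ _ _ (hh_der x)).
  by rewrite mulNr oppr_le0 mulr_ge0 // ?exprn_ge0 ?expR_ge0 // ltW.
- apply: derivable_within_continuous => x _.
  exact: (@ex_derive _ _ _ _ _ _ _ (hh_der x)).
all: by rewrite ?in_itv /= ?lexx ?p0.
Qed.

Lemma e2_le : expR 2 <= 15 / 2 :> R.
Proof.
have H := @hh_le1 (1/4).
have h14 : (0:R) <= 1/4 by lra.
have h14' : (1/4:R) < 1 by lra.
move: H; rewrite h14 h14' => /(_ isT); rewrite /hh /sp => H.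
set s := (1 / 4 + (1 / 4) ^+ 2 / 2 + (1 / 4) ^+ 3 / 3 : R) in H.
have hs : s = 55 / 192 by rewrite /s; field.
have hu : expR s <= 4 / 3.
  have := expR_gt0 s; lra.
have -> : expR 2 = expR (2 - 7%:R * s) * expR s ^+ 7 by rewrite -expRM_natl -expRD subrK.
have h1 : expR (2 - 7%:R * s) <= 1 by rewrite expR_le1 hs; lra.
have h2 : expR s ^+ 7 <= (4/3) ^+ 7 by apply: lerXn2r; rewrite // ?nnegrE ?expR_ge0 //; lra.
have h3 : (4/3) ^+ 7 <= 15 / 2 :> R by rewrite !exprS expr0; lra.
have := expR_ge0 (2 - 7%:R * s); have := exprn_ge0 7 (expR_ge0 s).
nra.
Qed.

Lemma expR_lb (x : R) : 0 <= x -> 1 + x + 5 / 12 * x ^+ 2 + 5 / 54 * x ^+ 3 <= expR x.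
Proof.
move=> x0.
have -> : expR x = expR (x / 6) ^+ 6 by rewrite -expRM_natr; congr expR; field.
have h := expR_ge1Dx (x / 6).
have h2 : (1 + x / 6) ^+ 6 <= expR (x / 6) ^+ 6.
  by apply: lerXn2r; rewrite // nnegrE; lra.
apply: le_trans h2.
set z := x / 6.
have hx : x = 6 * z by rewrite /z; field.
have z0 : 0 <= z by rewrite /z; lra.
rewrite hx !exprS expr0 !mulr1.
have := mulr_ge0 z0 z0; have := mulr_ge0 (mulr_ge0 z0 z0) z0.
have := mulr_ge0 (mulr_ge0 (mulr_ge0 z0 z0) z0) z0.
have := mulr_ge0 (mulr_ge0 (mulr_ge0 (mulr_ge0 z0 z0) z0) z0) z0.
have := mulr_ge0 (mulr_ge0 (mulr_ge0 (mulr_ge0 (mulr_ge0 z0 z0) z0) z0) z0) z0.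
nra.
Qed.

Definition ga : R := 2^-1 * (1 - expR (- 2)).

Lemma gfun_int (p : R) : 0 < p < 1 -> ga * (1 - p) + p / 3 <= gfun p.
Proof.
move=> /andP[p0 p1].
rewrite /gfun (gt_eqF p0) (lt_eqF p1).
set L := ln (1 - p)^-1.
have q0 : 0 < 1 - p by lra.
have hL : expR L = (1 - p)^-1 by rewrite /L lnK // posrE invr_gt0.
have hNL : expR (- L) = 1 - p by rewrite expRN hL invrK.
have hs : sp p <= L.
  rewrite -ler_expR hL.
  have := @hh_le1 p; rewrite (ltW p0) p1 => /(_ isT); rewrite /hh => H.
  by rewrite -(ler_pM2l q0) mulfV ?gt_eqF.
set x := p + 2 / 3 * p ^+ 2.
have hx : 2 / p * sp p = 2 + x by rewrite /sp /x; field; rewrite gt_eqF.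
have hW : expR (- ((2 + p) / p * L)) <= (1 - p) * expR (- 2) * expR (- x).
  rewrite -hNL -!expRD ler_expR.
  have -> : (2 + p) / p * L = L + 2 / p * L by field; rewrite gt_eqF.
  have : 2 / p * sp p <= 2 / p * L by rewrite ler_wpM2l // divr_ge0 // ltW.
  rewrite hx; lra.
set u := expR (- x).
have u0 : 0 <= u by exact: expR_ge0.
have x0 : 0 <= x by rewrite /x; have := mulr_ge0 (ltW p0) (ltW p0); rewrite expr2; lra.
have hP := expR_lb x x0.
have hux : u * expR x = 1 by rewrite /u mulrC expRxMexpNx_1.
set P := 1 + x + 5 / 12 * x ^+ 2 + 5 / 54 * x ^+ 3 in hP.
have uP : u * P <= 1 by rewrite -hux ler_wpM2l.
have P34 : 1 <= P * (1 - 3 / 4 * p).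
  rewrite /P /x !exprS expr0 !mulr1.
  have p01 : p <= 1 by lra.
  have pp := mulr_ge0 (ltW p0) (ltW p0).
  have ppp := mulr_ge0 pp (ltW p0).
  have p4 := mulr_ge0 ppp (ltW p0).
  have p5 := mulr_ge0 p4 (ltW p0).
  have p6 := mulr_ge0 p5 (ltW p0).
  have p7 := mulr_ge0 p6 (ltW p0).
  nra.
have hu : u <= 1 - 3 / 4 * p.
  have h1 : u * P * (1 - 3 / 4 * p) <= 1 - 3 / 4 * p by rewrite ler_piMl // ; lra.
  have h2 : u <= u * (P * (1 - 3 / 4 * p)) by rewrite ler_peMr.
  by rewrite (le_trans h2) // mulrA.
set E := expR (- 2 : R).
have E0 : 0 < E by exact: expR_gt0.
have hE : 2 / 15 <= E.
  have := e2_le; have : E * expR 2 = 1 by rewrite /E mulrC expRxMexpNx_1.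
  have := expR_gt0 (2:R). nra.
have hW2 : expR (- ((2 + p) / p * L)) <= (1 - p) * (E * (1 + p / 2) - p / 6).
  apply: (le_trans hW); rewrite -mulrA ler_wpM2l ?(ltW q0) //.
  rewrite -/E -/u.
  have h1 := ler_wpM2l (ltW E0) hu.
  have h2 : 0 <= p * (E - 2 / 15) by rewrite mulr_ge0 ?(ltW p0) // subr_ge0.
  lra.
have -> : ga * (1 - p) + p / 3 = (2 + p)^-1 * (1 - (1 - p) * (E * (1 + p / 2) - p / 6)).
  rewrite /ga -/E; field; lra.
rewrite ler_wpM2l //; first by rewrite invr_ge0; lra.
lra.
Qed.

Lemma measurable_inv : measurable_fun [set: R] (@GRing.inv R).
Proof.
have -> : [set: R] = [set 0] `|` [set x | x != 0].
  by apply/seteqP; split => x //= _; case: (eqVneq x 0) => [->|]; [left|right].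
apply/measurable_funU => //.
  by apply: open_measurable; exact: open_neq.
split; first exact: measurable_fun_set1.
apply: open_continuous_measurable_fun; first exact: open_neq.
by move=> x; rewrite inE /= => x0; exact: inv_continuous.
Qed.

Lemma measurable_gfun : measurable_fun [set: R] (@gfun R).
Proof.
rewrite /gfun.
apply: measurable_fun_ifT.
  by apply: measurable_fun_eqr => //; exact: measurable_cst.
  exact: measurable_cst.
apply: measurable_fun_ifT.
  by apply: measurable_fun_eqr => //; exact: measurable_cst.
  exact: measurable_cst.
apply: measurable_funM.
  apply: (measurableT_comp measurable_inv).
  by apply: measurable_funD => //; exact: measurable_cst.
apply: measurable_funB; first exact: measurable_cst.
pose G := fun x : R => - ((2 + x) / x * ln (1 - x)^-1).
change (measurable_fun setT (expR \o G)).
apply: measurableT_comp; first exact: measurable_expR.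
rewrite /G.
apply: measurableT_comp => //.
apply: measurable_funM.
  apply: measurable_funM.
    by apply: measurable_funD => //; exact: measurable_cst.
  exact: measurable_inv.
pose H := fun x : R => (1 - x)^-1.
change (measurable_fun setT ((@ln R) \o H)).
apply: measurableT_comp; first exact: measurable_ln.
pose K := fun x : R => 1 - x.
change (measurable_fun setT (GRing.inv \o K)).
apply: measurableT_comp; first exact: measurable_inv.
by apply: measurable_funB => //; exact: measurable_cst.
Qed.

Lemma e2_gt3 : 3 < expR 2 :> R.
Proof.
have := @expR_lb 2 ltac:(lra).
rewrite !exprS expr0 !mulr1; lra.
Qed.

Lemma ga_E : ga = (expR 2 - 1) / (2 * expR 2).
Proof.
rewrite /ga expRN; have := e2_gt3 => h; field; lra.
Qed.

Lemma ga_gt : 1 / 3 < ga.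
Proof.
rewrite ga_E; have := e2_gt3 => h.
have -> : (expR 2 - 1) / (2 * expR 2) = 1 / 3 + (expR 2 - 3) / (6 * expR 2) :> R.
  by field; lra.
have : 0 < (expR 2 - 3) / (6 * expR 2) :> R by apply: divr_gt0; lra.
lra.
Qed.

Lemma ga_le1 : ga <= 1.
Proof.
rewrite ga_E; have := e2_gt3 => h.
rewrite ler_pdivrMr; lra.
Qed.

Lemma cstar_gt0 : 0 < cstar R.
Proof.
rewrite /cstar; have := e2_gt3 => h; apply: divr_gt0; lra.
Qed.

Lemma cstar_lt1 : cstar R < 1.
Proof.
rewrite /cstar; have := e2_gt3 => h; rewrite ltr_pdivrMr; lra.
Qed.

Lemma cstar_eq : ga * (1 - cstar R) + cstar R / 3 = cstar R.
Proof.
rewrite ga_E /cstar; have := e2_gt3 => h; field; lra.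
Qed.

Lemma gfun_ge (p : R) : 0 <= p <= 1 -> ga * (1 - p) + p / 3 <= gfun p.
Proof.
move=> /andP[p0 p1].
have [->|pn0] := eqVneq p 0.
  by rewrite /gfun eqxx /ga subr0 mulr1 mul0r addr0.
have [->|pn1] := eqVneq p 1.
  by rewrite /gfun oner_eq0 eqxx subrr mulr0 add0r mul1r.
apply: gfun_int; apply/andP; split.
  by rewrite lt_neqAle eq_sym pn0.
by rewrite lt_neqAle pn1.
Qed.

Lemma chord_ge0 (p : R) : 0 <= p <= 1 -> 0 <= ga * (1 - p) + p / 3.
Proof.
move=> /andP[p0 p1]; have := ga_gt => h.
have : 0 <= ga * (1 - p) by apply: mulr_ge0; lra.
lra.
Qed.

Local Open Scope ereal_scope.

Lemma ge0E (r : R) : (0 <= r)%R -> 0 <= r%:E.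
Proof. by move=> h; exact: h. Qed.

Lemma lower_bound (mu : probability R R) :
  mu `[0%R, 1%R] = 1 -> (cstar R)%:E <= objective mu.
Proof.
move=> mu1.
have mD : measurable (`[0%R, 1%R] : set R) by exact: measurable_itv.
have inD (x : R) : (`[0%R, 1%R] : set R) x -> (0 <= x <= 1)%R.
  by rewrite /= in_itv.
have mid : measurable_fun (`[0%R, 1%R] : set R) (fun x : R => x%:E).
  by apply/measurable_EFinP; exact: measurable_id.
have m1 : measurable_fun (`[0%R, 1%R] : set R) (fun x : R => (1 - x)%:E).
  apply/measurable_EFinP; apply: measurable_funB => //; exact: measurable_cst.
set I := \int[mu]_(x in `[0%R, 1%R]) x%:E.
set J := \int[mu]_(x in `[0%R, 1%R]) (1 - x)%:E.
have I0 : 0 <= I by apply: integral_ge0 => x /inD /andP[].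
have J0 : 0 <= J.
  by apply: integral_ge0 => x /inD /andP[_ h]; apply: ge0E; rewrite subr_ge0.
have hIJ : I + J = 1.
  rewrite /I /J -ge0_integralD //; last 2 first.
    by move=> x /inD /andP[].
    by move=> x /inD /andP[_ h]; apply: ge0E; rewrite subr_ge0.
  under eq_integral do rewrite -EFinD addrC subrK.
  by rewrite (integral_cst mu mD 1) mul1e; exact: mu1.
have [i [hi i0 i1]] : exists i : R, [/\ I = i%:E, (0 <= i)%R & (i <= 1)%R].
  have fin2 (a b : \bar R) : 0 <= a -> 0 <= b -> a + b = 1 ->
      exists r : R, [/\ a = r%:E, (0 <= r)%R & (r <= 1)%R].
    case: a => [a| |]; case: b => [b| |] //= a0 b0 h.
    have a0' : (0 <= a)%R := a0.
    have b0' : (0 <= b)%R := b0.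
    exists a; split => //.
    move: h => [h]; lra.
  exact: fin2 I0 J0 hIJ.
have hg : (ga * (1 - i) + i / 3)%:E <= \int[mu]_(x in `[0%R, 1%R]) (gfun x)%:E.
  apply: (@le_trans _ _ (\int[mu]_(x in `[0%R, 1%R]) (ga * (1 - x) + x / 3)%:E)).
    have -> : \int[mu]_(x in `[0%R, 1%R]) (ga * (1 - x) + x / 3)%:E
       = ga%:E * J + (3^-1)%:E * I.
      have ga0 : (0 <= ga)%R by have := ga_gt; lra.
      have eJ : \int[mu]_(x in `[0%R, 1%R]) (ga%:E * (1 - x)%:E) = ga%:E * J.
        apply: ge0_integralZl => //.
          by move=> x /inD /andP[_ h]; apply: ge0E; rewrite subr_ge0.
      have eI : \int[mu]_(x in `[0%R, 1%R]) ((3^-1)%:E * x%:E) = (3^-1)%:E * I.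
        apply: ge0_integralZl => //.
          by move=> x /inD /andP[h _]; apply: ge0E.
      rewrite -eJ -eI -ge0_integralD //.
      - by apply: eq_integral => x _; rewrite -!EFinM -EFinD [(x / 3)%R]mulrC.
      - by move=> x /inD /andP[_ h]; rewrite -EFinM; apply: ge0E; apply: mulr_ge0; lra.
      - apply/measurable_EFinP; apply: measurable_funM; first exact: measurable_cst.
        by apply: measurable_funB => //; exact: measurable_cst.
      - by move=> x /inD /andP[h _]; rewrite -EFinM; apply: ge0E; rewrite mulr_ge0.
      - by apply/measurable_EFinP; apply: measurable_funM => //; exact: measurable_cst.
    have -> : J = (1 - i)%:E.
      move: hIJ; rewrite hi.
      have gen (b : \bar R) : i%:E + b = 1 -> b = (1 - i)%:E.
        by case: b => [b| |] //= [<-]; rewrite addrC addrK.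
      exact: gen.
    rewrite hi -!EFinM -EFinD lee_fin; lra.
  apply: ge0_le_integral => //.
  - by move=> x /inD h; apply: ge0E; rewrite chord_ge0.
  - apply/measurable_EFinP; apply: measurable_funD.
      apply: measurable_funM; first exact: measurable_cst.
      by apply: measurable_funB => //; exact: measurable_cst.
    by apply: measurable_funM => //; exact: measurable_cst.
  - by apply/measurable_EFinP; apply: measurable_funTS; exact: measurable_gfun.
  - by move=> x /inD h; rewrite lee_fin gfun_ge.
rewrite /objective -/I hi.
have [ci|ic] := leP (cstar R) i.
  by rewrite le_max lee_fin ci orbT.
rewrite le_max; apply/orP; left; apply: le_trans hg.
rewrite lee_fin -{1}cstar_eq.
have := ga_gt => h.
have : (0 <= (cstar R - i) * (ga - 1/3))%R by apply: mulr_ge0; lra.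
lra.
Qed.

Lemma int_set1 (mu : probability R R) (f : R -> R) (a : R) :
  \int[mu]_(x in [set a]) (f x)%:E = (f a)%:E * mu [set a].
Proof.
rewrite (@eq_integral _ _ _ mu [set a] (cst (f a)%:E)).
  by rewrite integral_cst.
by move=> x; rewrite inE /= => ->.
Qed.

Lemma int_two (mu : probability R R) (f : R -> R) :
  measurable_fun [set: R] f ->
  mu [set 1%R] = (cstar R)%:E -> mu [set 0%R] = (1 - cstar R)%:E ->
  \int[mu]_(x in `[0%R, 1%R]) (f x)%:E = ((f 0 * (1 - cstar R) + f 1 * cstar R)%R)%:E.
Proof.
move=> mf m1 m0.
set A0 := [set (0%R:R)]; set A1 := [set (1%R:R)]; set B := (`]0%R, 1%R[ : set R).
have mB : measurable B by exact: measurable_itv.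
have mA0 : measurable A0 by exact: measurable_set1.
have mA1 : measurable A1 by exact: measurable_set1.
have mA01 : measurable (A0 `|` A1) by exact: measurableU.
have d01 : [disjoint A0 & A1].
  by apply/disj_setPS => x [/= -> /esym/eqP]; rewrite oner_eq0.
have dB : [disjoint A0 `|` A1 & B].
  apply/disj_setPS => x [[/= ->|/= ->]]; rewrite /B /= in_itv /= ?ltxx //.
  by rewrite andbF.
have hD : (`[0%R, 1%R] : set R) = (A0 `|` A1) `|` B.
  apply/seteqP; split => x /=.
    rewrite !in_itv /= => /andP[x0 x1].
    have [->|xn0] := eqVneq x 0%R; first by left; left.
    have [->|xn1] := eqVneq x 1%R; first by left; right.
    right; rewrite /B /= in_itv /=.
    by rewrite lt_neqAle eq_sym xn0 x0 lt_neqAle xn1 x1.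
  rewrite in_itv /=.
  case=> [[->|->]|]; rewrite ?lexx ?ler01 //.
  by rewrite /B /= in_itv /= => /andP[h1 h2]; rewrite !ltW.
have muB : mu B = 0.
  have hU : mu ((A0 `|` A1) `|` B) = mu A0 + mu A1 + mu B.
    rewrite measureU //; last exact/disj_set2P.
    by rewrite measureU //; apply/disj_set2P.
  have le1 : mu ((A0 `|` A1) `|` B) <= 1.
    by apply: probability_le1; apply: measurableU => //; apply: measurableU.
  move: le1; rewrite hU m0 m1.
  have : 0 <= mu B by exact: measure_ge0.
  case: (mu B) => [b| |] //= b0 h.
  congr EFin; move: h; rewrite -!EFinD lee_fin.
  have b0' : (0 <= b)%R := b0.
  lra.
rewrite hD integral_setU //; last first.
  by apply/measurable_EFinP; apply: measurable_funTS.
rewrite integral_setU //; last by apply/measurable_EFinP; apply: measurable_funTS.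
rewrite (null_set_integral mB) //; last by apply/measurable_EFinP; apply: measurable_funTS.
by rewrite !int_set1 m0 m1 adde0 -!EFinM -EFinD.
Qed.

Lemma objective_two (mu : probability R R) :
  mu [set 1%R] = (cstar R)%:E -> mu [set 0%R] = (1 - cstar R)%:E ->
  objective mu = (cstar R)%:E.
Proof.
move=> m1 m0.
rewrite /objective (int_two _ _ measurable_gfun m1 m0).
rewrite (@int_two _ id (@measurable_id _ _ _) m1 m0) /=.
have -> : gfun (0%R:R) = ga by rewrite /gfun eqxx.
have -> : gfun (1%R:R) = (3^-1)%R by rewrite /gfun oner_eq0 eqxx.
rewrite mul0r add0r mul1r [(3^-1 * _)%R]mulrC cstar_eq.
by rewrite maxxx.
Qed.

Local Close Scope ereal_scope.

Lemma cstar_ge0 : 0 <= cstar R.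
Proof. exact: ltW cstar_gt0. Qed.
Lemma cstar_le1 : 0 <= 1 - cstar R.
Proof. by rewrite subr_ge0 ltW // cstar_lt1. Qed.

Definition mstar := measure_add (mscale (NngNum cstar_ge0) (@dirac _ R (1:R) R))
  (mscale (NngNum cstar_le1) (@dirac _ R (0:R) R)).
HB.instance Definition _ := Measure.copy mstar (measure_add (mscale (NngNum cstar_ge0) (@dirac _ R (1:R) R))
  (mscale (NngNum cstar_le1) (@dirac _ R (0:R) R))).

Lemma mstarE (A : set R) :
  mstar A = ((cstar R)%:E * \d_(1%R:R) A + (1 - cstar R)%:E * \d_(0%R:R) A)%E.
Proof. by rewrite /mstar measure_addE. Qed.

Lemma mstarT : mstar setT = 1%E.
Proof.
by rewrite mstarE !diracT !mule1 -EFinD addrC subrK.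
Qed.

HB.instance Definition _ := Measure_isProbability.Build _ _ _ mstar mstarT.

Lemma mstar1 : mstar [set 1] = (cstar R)%:E.
Proof.
rewrite mstarE !diracE mem_set // memNset /=; last by apply/eqP; rewrite eq_sym oner_eq0.
by rewrite mule1 mule0 adde0.
Qed.

Lemma mstar0 : mstar [set 0] = (1 - cstar R)%:E.
Proof.
rewrite mstarE !diracE (@memNset _ [set 0%R] 1%R); last by apply/eqP; rewrite oner_eq0.
rewrite mem_set //=.
by rewrite mule1 mule0 add0e.
Qed.

Lemma mstar01 : mstar `[0%R, 1%R] = 1%E.
Proof.
rewrite mstarE !diracE !mem_set /=; last 2 first.
  by rewrite in_itv /= lexx ler01.
  by rewrite in_itv /= lexx ler01.
by rewrite !mule1 -EFinD addrC subrK.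
Qed.
End S.

Theorem mainTheorem9 (R : realType) :
  ereal_inf [set objective mu | mu in @prob01 R] = (cstar R)%:E /\
  (exists mu : probability R R,
      mu [set 1] = (cstar R)%:E /\ mu [set 0] = (1 - cstar R)%:E) /\
  (forall mu : probability R R,
      mu [set 1] = (cstar R)%:E -> mu [set 0] = (1 - cstar R)%:E ->
      objective mu = (cstar R)%:E).
Proof.
split; last split.
- apply/eqP; rewrite eq_le; apply/andP; split.
    apply: ereal_inf_lbound; exists (mstar R); first exact: mstar01.
    exact: objective_two (mstar1 R) (mstar0 R).
  apply: le_ereal_inf_tmp => _ [mu hmu <-].
  exact: lower_bound hmu.
- by exists (mstar R); split; [exact: mstar1 | exact: mstar0].
- by move=> mu; exact: objective_two.
Qed.
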